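(* Let $\lambda=\frac{\sqrt5+1}{2}$ and $D\mathcal{G}_{\mathbf 0}=\mathrm{diag}(-1,\lambda^{-1},\lambda)$. Let $M>0$ and $C>1$. Then there exists $\xi_0\in(0,\lambda-1)$ such that for all $\xi\in(0,\xi_0)$ the following holds. Suppose $G=(G_x,G_y,G_z):\mathbb{R}^3\to\mathbb{R}^3$ is a $C^2$ diffeomorphism such that (i) $\|\nabla\partial_\beta G_\alpha\|<M$ for all $\alpha,\beta\in\{x,y,z\}$, and (ii) $G$ is $\xi$-close to the linear map $D\mathcal{G}_{\mathbf 0}$ in the $C^1$ topology. Suppose $\gamma=(\gamma_x,\gamma_y,\gamma_z)$ is a $C^2$ curve in $\mathbb{R}^3$ such that for all $t$: (1) $\|\gamma'(t)\|<C$; (2) $\gamma_x(t)=t$; (3) $\frac{\lambda-\xi-1}{4}|\gamma_z''(t)|>3MC^2$; (4) $\frac{\lambda-\xi-1}{4}|\gamma_z''(t)|>\xi|\gamma_y''(t)|$. Then for all $t$, $$\Big|\tfrac{d^2}{dt^2}G_z\circ\gamma(t)\Big|>|\gamma_z''(t)|+\tfrac{\lambda-\xi-1}{2}|\gamma_z''(t)|$$ and $$\tfrac{\lambda-\xi-1}{4}\Big|\tfrac{d^2}{dt^2}G_z\circ\gamma(t)\Big|>\xi\Big|\tfrac{d^2}{dt^2}G_y\circ\gamma(t)\Big|+\tfrac{(\lambda-1)^2}{8}|\gamma_z''(t)|.$$ *)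

(* Defs.v *)
From Stdlib Require Import Reals Lra.
From Coquelicot Require Import Coquelicot.
Open Scope R_scope.

Definition pt : Type := (R * R * R)%type.
Inductive ax : Type := AX | AY | AZ.

Definition coord (c : ax) (p : pt) : R :=
  match c, p with
  | AX, (x, _, _) => x
  | AY, (_, y, _) => y
  | AZ, (_, _, z) => z
  end.

Definition upd (c : ax) (p : pt) (s : R) : pt :=
  match c, p with
  | AX, (_, y, z) => (s, y, z)
  | AY, (x, _, z) => (x, s, z)
  | AZ, (x, y, _) => (x, y, s)
  end.

Definition partial (c : ax) (f : pt -> R) (p : pt) : R :=
  Derive (fun s => f (upd c p s)) (coord c p).

Definition ex_partial (c : ax) (f : pt -> R) (p : pt) : Prop :=
  ex_derive (fun s => f (upd c p s)) (coord c p).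

Definition C2_fun (f : pt -> R) : Prop :=
  (forall p, continuous f p) /\
  (forall b p, ex_partial b f p /\ continuous (partial b f) p) /\
  (forall b d p, ex_partial d (partial b f) p /\
                 continuous (partial d (partial b f)) p).

Definition gcomp (G : pt -> pt) (c : ax) : pt -> R := fun p => coord c (G p).

Definition C2_map (G : pt -> pt) : Prop := forall c, C2_fun (gcomp G c).

Definition C2_diffeo (G : pt -> pt) : Prop :=
  C2_map G /\ exists H : pt -> pt, C2_map H /\
    (forall p, H (G p) = p) /\ (forall p, G (H p) = p).

Definition lam : R := (sqrt 5 + 1) / 2.

Definition Ldiag (c : ax) : R :=
  match c with AX => -1 | AY => / lam | AZ => lam end.

Definition Lmat (a b : ax) : R :=
  match a, b with
  | AX, AX | AY, AY | AZ, AZ => Ldiag a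
  | _, _ => 0
  end.

Definition Lmap (p : pt) : pt :=
  (Ldiag AX * coord AX p, Ldiag AY * coord AY p, Ldiag AZ * coord AZ p).

Definition C1_close (xi : R) (G : pt -> pt) : Prop :=
  forall p,
    (forall a, Rabs (gcomp G a p - coord a (Lmap p)) < xi) /\
    (forall a b, Rabs (partial b (gcomp G a) p - Lmat a b) < xi).

Definition grad_norm (f : pt -> R) (p : pt) : R :=
  sqrt ((partial AX f p)^2 + (partial AY f p)^2 + (partial AZ f p)^2).

Definition ccomp (g : R -> pt) (c : ax) : R -> R := fun t => coord c (g t).

Definition C2_curve_on (a b : R) (g : R -> pt) : Prop :=
  forall c t, a < t < b ->
    ex_derive (ccomp g c) t /\ ex_derive (Derive (ccomp g c)) t /\
    continuous (Derive_n (ccomp g c) 2) t.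

Definition speed (g : R -> pt) (t : R) : R :=
  sqrt ((Derive (ccomp g AX) t)^2 + (Derive (ccomp g AY) t)^2
        + (Derive (ccomp g AZ) t)^2).

(* Main.v *)
Require Import Defs.
From Stdlib Require Import Reals Lra Psatz.
From Coquelicot Require Import Coquelicot.
Open Scope R_scope.
From Stdlib Require Import Psatz.

Lemma mm_abs a b c : Rmin a b <= c <= Rmax a b -> Rabs (c - a) <= Rabs (b - a).
Proof.
intros [H1 H2]. unfold Rmin, Rmax in *. destruct (Rle_dec a b);
unfold Rabs; repeat destruct Rcase_abs; lra.
Qed.

Lemma mvt1 (g dg : R -> R) x0 x1 : (forall s, is_derive g s (dg s)) ->
  exists c, Rabs (c - x0) <= Rabs (x1 - x0) /\ g x1 - g x0 = dg c * (x1 - x0).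
Proof.
intros H. destruct (MVT_gen g x0 x1 dg) as [c [Hc E]].
- intros; apply H.
- intros; apply continuity_pt_filterlim. apply (ex_derive_continuous (K:=R_AbsRing) (V:=R_NormedModule) g). eexists; apply H.
- exists c; split; [apply mm_abs; exact Hc| exact E].
Qed.

Lemma term_bound L' L q d eta : Rabs (L'-L) < eta -> Rabs (q-d) < eta -> eta <= 1 ->
  Rabs (L'*q - L*d) <= eta*(Rabs d + 1 + Rabs L).
Proof.
intros H1 H2 H3.
replace (L'*q - L*d) with ((L'-L)*q + L*(q-d)) by ring.
eapply Rle_trans; [apply Rabs_triang|]. rewrite !Rabs_mult.
assert (Rabs q <= Rabs d + 1).
{ replace q with (d + (q - d)) by ring. eapply Rle_trans; [apply Rabs_triang|]. lra. }
assert (0 <= Rabs (L'-L)) by apply Rabs_pos.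
assert (0 <= Rabs (q-d)) by apply Rabs_pos.
assert (0 <= Rabs L) by apply Rabs_pos.
assert (0 <= Rabs q) by apply Rabs_pos.
nra.
Qed.

Lemma cont_eps (f : pt -> R) x0 y0 z0 : continuous f (x0,y0,z0) ->
  forall eps, 0 < eps -> exists d, 0 < d /\ forall x y z,
   Rabs (x - x0) < d -> Rabs (y - y0) < d -> Rabs (z - z0) < d ->
   Rabs (f (x,y,z) - f (x0,y0,z0)) < eps.
Proof.
intros Hc eps He.
destruct (proj1 (filterlim_locally f (f (x0,y0,z0))) Hc (mkposreal eps He)) as [d Hd].
exists d; split; [apply cond_pos|].
intros x y z Hx Hy Hz.
apply (Hd (x,y,z)). split; [split|]; assumption.
Qed.

Lemma chain3 (f : pt -> R) (u v w : R -> R) t du dv dw :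
  (forall b p, ex_partial b f p) ->
  (forall b, continuous (partial b f) (u t, v t, w t)) ->
  is_derive u t du -> is_derive v t dv -> is_derive w t dw ->
  is_derive (fun s => f (u s, v s, w s)) t
    (partial AX f (u t, v t, w t) * du + partial AY f (u t, v t, w t) * dv
     + partial AZ f (u t, v t, w t) * dw).
Proof.
intros Hex Hc Hu Hv Hw.
set (L1 := partial AX f (u t, v t, w t)).
set (L2 := partial AY f (u t, v t, w t)).
set (L3 := partial AZ f (u t, v t, w t)).
apply is_derive_Reals in Hu, Hv, Hw. apply is_derive_Reals.
intros eps Heps.
set (S := Rabs du + 1 + Rabs L1 + (Rabs dv + 1 + Rabs L2) + (Rabs dw + 1 + Rabs L3)).
assert (HS : 0 <= S) by (unfold S; pose proof (Rabs_pos du); pose proof (Rabs_pos dv);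
  pose proof (Rabs_pos dw); pose proof (Rabs_pos L1); pose proof (Rabs_pos L2);
  pose proof (Rabs_pos L3); lra).
set (eta := Rmin 1 (eps / (S+1))).
assert (Heta : 0 < eta) by (apply Rmin_glb_lt; [lra| apply Rdiv_lt_0_compat; lra]).
assert (Heta1 : eta <= 1) by apply Rmin_l.
assert (HetaS : eta * (S+1) <= eps).
{ apply Rle_trans with (eps / (S+1) * (S+1)).
  - apply Rmult_le_compat_r; [lra| apply Rmin_r].
  - right; field; lra. }
destruct (Hu eta Heta) as [du' Hdu].
destruct (Hv eta Heta) as [dv' Hdv].
destruct (Hw eta Heta) as [dw' Hdw].
destruct (cont_eps _ _ _ _ (Hc AX) eta Heta) as [d1 [Hd1 C1]].
destruct (cont_eps _ _ _ _ (Hc AY) eta Heta) as [d2 [Hd2 C2]].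
destruct (cont_eps _ _ _ _ (Hc AZ) eta Heta) as [d3 [Hd3 C3]].
set (d := Rmin d1 (Rmin d2 d3)).
assert (Hd : 0 < d) by (repeat apply Rmin_glb_lt; lra).
assert (Hdd1 : d <= d1) by apply Rmin_l.
assert (Hdd2 : d <= d2) by (eapply Rle_trans; [apply Rmin_r|apply Rmin_l]).
assert (Hdd3 : d <= d3) by (eapply Rle_trans; [apply Rmin_r|apply Rmin_r]).
assert (Hdel : 0 < Rmin (Rmin du' dv') (Rmin dw' (d/(S+1)))).
{ pose proof (cond_pos du'); pose proof (cond_pos dv'); pose proof (cond_pos dw').
  repeat apply Rmin_glb_lt; try lra. apply Rdiv_lt_0_compat; lra. }
exists (mkposreal _ Hdel). simpl. intros h hne hlt.
assert (h1 : Rabs h < du') by (eapply Rlt_le_trans; [exact hlt|]; eapply Rle_trans; apply Rmin_l).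
assert (h2 : Rabs h < dv') by (eapply Rlt_le_trans; [exact hlt|]; eapply Rle_trans; [apply Rmin_l|apply Rmin_r]).
assert (h3 : Rabs h < dw') by (eapply Rlt_le_trans; [exact hlt|]; eapply Rle_trans; [apply Rmin_r|apply Rmin_l]).
assert (h4 : Rabs h < d/(S+1)) by (eapply Rlt_le_trans; [exact hlt|]; eapply Rle_trans; [apply Rmin_r|apply Rmin_r]).
specialize (Hdu h hne h1). specialize (Hdv h hne h2). specialize (Hdw h hne h3).
set (qu := (u (t+h) - u t)/h) in *.
set (qv := (v (t+h) - v t)/h) in *.
set (qw := (w (t+h) - w t)/h) in *.
assert (Hhp : 0 < Rabs h) by (apply Rabs_pos_lt; exact hne).
assert (Hsmall : forall q dq, Rabs (q - dq) < eta -> Rabs dq + 1 <= S -> Rabs (q * h) < d).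
{ intros q dq Hq HdqS. rewrite Rabs_mult.
  assert (Rabs q <= Rabs dq + 1).
  { replace q with (dq + (q - dq)) by ring. eapply Rle_trans; [apply Rabs_triang|]. lra. }
  apply Rle_lt_trans with ((S+1) * Rabs h).
  - apply Rmult_le_compat_r; [lra| lra].
  - apply Rmult_lt_reg_r with (/(S+1)). apply Rinv_0_lt_compat; lra.
    replace ((S + 1) * Rabs h * / (S + 1)) with (Rabs h) by (field; lra).
    exact h4. }
assert (Su : Rabs (qu*h) < d).
{ apply (Hsmall qu du Hdu). unfold S; pose proof (Rabs_pos dv);
  pose proof (Rabs_pos dw); pose proof (Rabs_pos L1); pose proof (Rabs_pos L2);
  pose proof (Rabs_pos L3); lra. }
assert (Sv : Rabs (qv*h) < d).
{ apply (Hsmall qv dv Hdv). unfold S; pose proof (Rabs_pos du);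
  pose proof (Rabs_pos dw); pose proof (Rabs_pos L1); pose proof (Rabs_pos L2);
  pose proof (Rabs_pos L3); lra. }
assert (Sw : Rabs (qw*h) < d).
{ apply (Hsmall qw dw Hdw). unfold S; pose proof (Rabs_pos du);
  pose proof (Rabs_pos dv); pose proof (Rabs_pos L1); pose proof (Rabs_pos L2);
  pose proof (Rabs_pos L3); lra. }
assert (Eu : qu * h = u (t+h) - u t) by (unfold qu; field; exact hne).
assert (Ev : qv * h = v (t+h) - v t) by (unfold qv; field; exact hne).
assert (Ew : qw * h = w (t+h) - w t) by (unfold qw; field; exact hne).
rewrite Eu in Su; rewrite Ev in Sv; rewrite Ew in Sw.
destruct (mvt1 (fun s => f (s, v (t+h), w (t+h))) (fun s => partial AX f (s, v (t+h), w (t+h)))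
   (u t) (u (t+h))) as [c1 [Hc1 E1]].
{ intros s. apply Derive_correct. apply (Hex AX (s, v (t+h), w (t+h))). }
destruct (mvt1 (fun s => f (u t, s, w (t+h))) (fun s => partial AY f (u t, s, w (t+h)))
   (v t) (v (t+h))) as [c2 [Hc2 E2]].
{ intros s. apply Derive_correct. apply (Hex AY (u t, s, w (t+h))). }
destruct (mvt1 (fun s => f (u t, v t, s)) (fun s => partial AZ f (u t, v t, s))
   (w t) (w (t+h))) as [c3 [Hc3 E3]].
{ intros s. apply Derive_correct. apply (Hex AZ (u t, v t, s)). }
simpl in E1, E2, E3.
assert (B1 : Rabs (partial AX f (c1, v (t+h), w (t+h)) - L1) < eta).
{ apply C1; lra. }
assert (B2 : Rabs (partial AY f (u t, c2, w (t+h)) - L2) < eta).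
{ apply C2; try lra. unfold Rminus; rewrite Rplus_opp_r, Rabs_R0; lra. }
assert (B3 : Rabs (partial AZ f (u t, v t, c3) - L3) < eta).
{ apply C3; try lra; unfold Rminus; rewrite Rplus_opp_r, Rabs_R0; lra. }
pose proof (term_bound _ _ _ _ _ B1 Hdu Heta1) as T1.
pose proof (term_bound _ _ _ _ _ B2 Hdv Heta1) as T2.
pose proof (term_bound _ _ _ _ _ B3 Hdw Heta1) as T3.
replace ((f (u (t + h), v (t + h), w (t + h)) - f (u t, v t, w t)) / h -
   (L1 * du + L2 * dv + L3 * dw)) with
  ((partial AX f (c1, v (t+h), w (t+h)) * qu - L1 * du) +
   (partial AY f (u t, c2, w (t+h)) * qv - L2 * dv) +
   (partial AZ f (u t, v t, c3) * qw - L3 * dw)).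
2:{ unfold qu, qv, qw.
    replace (f (u (t + h), v (t + h), w (t + h)) - f (u t, v t, w t)) with
      ((f (u (t + h), v (t + h), w (t + h)) - f (u t, v (t+h), w (t + h)))
      + (f (u t, v (t + h), w (t + h)) - f (u t, v t, w (t + h)))
      + (f (u t, v t, w (t + h)) - f (u t, v t, w t))) by ring.
    rewrite E1, E2, E3. field. exact hne. }
eapply Rle_lt_trans; [apply Rabs_triang|].
eapply Rle_lt_trans; [apply Rplus_le_compat_r; apply Rabs_triang|].
unfold S in HetaS. nra.
Qed.

Lemma pt_eta (p : pt) : (coord AX p, coord AY p, coord AZ p) = p.
Proof. destruct p as [[x y] z]; reflexivity. Qed.

Lemma D1 (f : pt -> R) (g : R -> pt) s :
  (forall b p, ex_partial b f p) -> (forall b p, continuous (partial b f) p) ->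
  (forall c, ex_derive (ccomp g c) s) ->
  is_derive (fun s => f (g s)) s
   (partial AX f (g s) * Derive (ccomp g AX) s + partial AY f (g s) * Derive (ccomp g AY) s
    + partial AZ f (g s) * Derive (ccomp g AZ) s).
Proof.
intros He Hc Hd.
apply is_derive_ext with (fun r => f (ccomp g AX r, ccomp g AY r, ccomp g AZ r)).
{ intros r. unfold ccomp. rewrite pt_eta. reflexivity. }
pose proof (chain3 f (ccomp g AX) (ccomp g AY) (ccomp g AZ) s _ _ _ He
  (fun b => Hc b _) (Derive_correct _ _ (Hd AX)) (Derive_correct _ _ (Hd AY))
  (Derive_correct _ _ (Hd AZ))) as H.
replace (ccomp g AX s, ccomp g AY s, ccomp g AZ s) with (g s) in H by (unfold ccomp; symmetry; apply pt_eta). exact H.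
Qed.

Lemma pder (f g : R -> R) x df dg : is_derive f x df -> is_derive g x dg ->
  is_derive (fun s => f s * g s) x (df * g x + f x * dg).
Proof. intros A B. exact (is_derive_mult f g x df dg A B Rmult_comm). Qed.
Lemma sder (f g : R -> R) x df dg : is_derive f x df -> is_derive g x dg ->
  is_derive (fun s => f s + g s) x (df + dg).
Proof. intros A B. exact (is_derive_plus f g x df dg A B). Qed.

Definition Hs (f : pt -> R) (g : R -> pt) (t : R) (b : ax) :=
  (partial AX (partial b f) (g t) * Derive (ccomp g AX) t
   + partial AY (partial b f) (g t) * Derive (ccomp g AY) t
   + partial AZ (partial b f) (g t) * Derive (ccomp g AZ) t).

Lemma D2 (f : pt -> R) (g : R -> pt) a b t :
  C2_fun f -> C2_curve_on a b g -> a < t < b ->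
  Derive_n (fun s => f (g s)) 2 t =
    (Hs f g t AX * Derive (ccomp g AX) t + partial AX f (g t) * Derive_n (ccomp g AX) 2 t)
  + (Hs f g t AY * Derive (ccomp g AY) t + partial AY f (g t) * Derive_n (ccomp g AY) 2 t)
  + (Hs f g t AZ * Derive (ccomp g AZ) t + partial AZ f (g t) * Derive_n (ccomp g AZ) 2 t).
Proof.
intros [_ [H1 H2]] Hg Ht.
apply is_derive_unique.
apply is_derive_ext_loc with (fun s =>
   partial AX f (g s) * Derive (ccomp g AX) s + partial AY f (g s) * Derive (ccomp g AY) s
    + partial AZ f (g s) * Derive (ccomp g AZ) s).
{ assert (He : 0 < Rmin (t - a) (b - t)) by (apply Rmin_glb_lt; lra).
  exists (mkposreal _ He). intros s Hs0. change (Rabs (s - t) < Rmin (t - a) (b - t)) in Hs0.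
  assert (Hs1 : a < s < b).
  { pose proof (Rmin_l (t-a) (b-t)); pose proof (Rmin_r (t-a) (b-t));
    unfold Rabs in Hs0; destruct Rcase_abs in Hs0; lra. }
  symmetry. apply is_derive_unique. apply D1.
  - intros; apply H1. - intros; apply H1. - intros c; apply (Hg c s Hs1). }
assert (Hd : forall c, ex_derive (ccomp g c) t) by (intros c; apply (Hg c t Ht)).
assert (Hd2 : forall c, is_derive (Derive (ccomp g c)) t (Derive_n (ccomp g c) 2 t)).
{ intros c. apply Derive_correct. apply (Hg c t Ht). }
assert (Hp : forall c, is_derive (fun s => partial c f (g s)) t (Hs f g t c)).
{ intros c. apply D1; [intros; apply H2| intros; apply H2| exact Hd]. }
apply (sder (fun s => _ + _)); [apply (sder (fun s => _))|];
  apply (pder (fun s => partial _ f (g s))); [apply Hp| apply Hd2| apply Hp| apply Hd2| apply Hp| apply Hd2].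
Qed.
Lemma pbound M h d e : Rabs h <= M -> Rabs (h*d*e) <= M * (Rabs d * Rabs e).
Proof. intros H. rewrite !Rabs_mult. rewrite Rmult_assoc.
apply Rmult_le_compat_r; [|exact H]. apply Rmult_le_pos; apply Rabs_pos. Qed.
Lemma ab x y : Rabs x <= y -> -y <= x <= y.
Proof. unfold Rabs; destruct Rcase_abs; lra. Qed.

Lemma qb M h11 h12 h13 h21 h22 h23 h31 h32 h33 d1 d2 d3 :
 Rabs h11 <= M -> Rabs h12 <= M -> Rabs h13 <= M ->
 Rabs h21 <= M -> Rabs h22 <= M -> Rabs h23 <= M ->
 Rabs h31 <= M -> Rabs h32 <= M -> Rabs h33 <= M ->
 Rabs ((h11*d1 + h21*d2 + h31*d3)*d1 + (h12*d1+h22*d2+h32*d3)*d2 + (h13*d1+h23*d2+h33*d3)*d3)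
   <= 3*M*(d1^2+d2^2+d3^2).
Proof.
intros.
pose proof (ab _ _ (pbound _ _ d1 d1 H)). pose proof (ab _ _ (pbound _ _ d2 d1 H2)). pose proof (ab _ _ (pbound _ _ d3 d1 H5)).
pose proof (ab _ _ (pbound _ _ d1 d2 H0)). pose proof (ab _ _ (pbound _ _ d2 d2 H3)). pose proof (ab _ _ (pbound _ _ d3 d2 H6)).
pose proof (ab _ _ (pbound _ _ d1 d3 H1)). pose proof (ab _ _ (pbound _ _ d2 d3 H4)). pose proof (ab _ _ (pbound _ _ d3 d3 H7)).
replace ((h11*d1 + h21*d2 + h31*d3)*d1 + (h12*d1+h22*d2+h32*d3)*d2 + (h13*d1+h23*d2+h33*d3)*d3)
 with (h11*d1*d1 + h21*d2*d1 + h31*d3*d1 + (h12*d1*d2 + h22*d2*d2 + h32*d3*d2)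
   + (h13*d1*d3 + h23*d2*d3 + h33*d3*d3)) by ring.
assert (E1 : d1^2 = Rabs d1*Rabs d1) by (rewrite <- Rabs_mult, Rabs_pos_eq; [ring| nra]).
assert (E2 : d2^2 = Rabs d2*Rabs d2) by (rewrite <- Rabs_mult, Rabs_pos_eq; [ring| nra]).
assert (E3 : d3^2 = Rabs d3*Rabs d3) by (rewrite <- Rabs_mult, Rabs_pos_eq; [ring| nra]).
set (A1 := Rabs d1) in *. set (A2 := Rabs d2) in *. set (A3 := Rabs d3) in *.
assert (HM : 0 <= M) by (eapply Rle_trans; [apply Rabs_pos|exact H]).
assert (K : M*((A1+A2+A3)*(A1+A2+A3)) <= M*(3*(A1*A1+A2*A2+A3*A3))).
{ apply Rmult_le_compat_l; [exact HM|]. pose proof (pow2_ge_0 (A1-A2)); pose proof (pow2_ge_0 (A1-A3)); pose proof (pow2_ge_0 (A2-A3)); nra. }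
apply Rabs_le. rewrite E1, E2, E3. 
assert (M*((A1+A2+A3)*(A1+A2+A3)) = M*(A1*A1)+M*(A2*A1)+M*(A3*A1)+M*(A1*A2)+M*(A2*A2)+M*(A3*A2)
  +M*(A1*A3)+M*(A2*A3)+M*(A3*A3)) by ring.
assert (M*(3*(A1*A1+A2*A2+A3*A3)) = 3*M*(A1*A1+A2*A2+A3*A3)) by ring.
lra.
Qed.
Lemma arith lam il xi K sz sy a bb c e Qz Qy :
  1.6 < lam < 1.65 -> 0 < il < 0.63 -> 0 < xi < 1/100 ->
  Rabs a < xi -> Rabs (bb - lam) < xi -> Rabs (c - il) < xi -> Rabs e < xi ->
  Rabs Qz < K -> Rabs Qy < K ->
  (lam - xi - 1)/4 * Rabs sz > K -> (lam - xi - 1)/4 * Rabs sz > xi * Rabs sy ->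
  Rabs (Qz + a*sy + bb*sz) > Rabs sz + (lam - xi - 1)/2 * Rabs sz /\
  (lam - xi - 1)/4 * Rabs (Qz + a*sy + bb*sz) >
    xi * Rabs (Qy + c*sy + e*sz) + (lam - 1)^2/8 * Rabs sz.
Proof.
intros Hl Hil Hxi Ha Hb Hc He HQz HQy H3 H4.
set (Z := Rabs sz) in *. set (Y := Rabs sy) in *.
set (k := (lam - xi - 1)/4) in *.
assert (HZ : 0 <= Z) by apply Rabs_pos. assert (HY : 0 <= Y) by apply Rabs_pos.
assert (Hk : 0.14 < k) by (unfold k; lra).
assert (Hb' : lam - xi <= Rabs bb).
{ unfold Rabs in *; repeat destruct Rcase_abs; lra. }
assert (Hc' : Rabs c <= il + xi).
{ unfold Rabs in *; repeat destruct Rcase_abs; lra. }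
assert (T1 : Rabs (bb*sz) <= Rabs (Qz + a*sy + bb*sz) + Rabs (a*sy) + Rabs Qz).
{ clear -HQz. unfold Rabs; repeat destruct Rcase_abs; lra. }
rewrite Rabs_mult in T1. rewrite (Rabs_mult a sy) in T1. fold Z Y in T1.
assert (P1 : (lam - xi) * Z <= Rabs bb * Z) by (apply Rmult_le_compat_r; lra).
assert (P2 : Rabs a * Y <= xi * Y) by (apply Rmult_le_compat_r; lra).
set (G := Rabs (Qz + a * sy + bb * sz)) in *.
assert (G1 : G > Z + 2*k*Z) by (unfold k in *; nra).
split. { replace ((lam - xi - 1)/2) with (2*k) by (unfold k; field). lra. }
assert (T2 : Rabs (Qy + c*sy + e*sz) <= Rabs Qy + Rabs c * Y + Rabs e * Z).
{ eapply Rle_trans; [apply Rabs_triang|]. rewrite (Rabs_mult e sz).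
  apply Rplus_le_compat_r. eapply Rle_trans; [apply Rabs_triang|].
  rewrite Rabs_mult. right; reflexivity. }
assert (P3 : Rabs c * Y <= (il + xi) * Y) by (apply Rmult_le_compat_r; lra).
assert (P4 : Rabs e * Z <= xi * Z) by (apply Rmult_le_compat_r; lra).
set (W := Rabs (Qy + c * sy + e * sz)) in *.
assert (W1 : xi * W <= xi * (K + (il+xi)*Y + xi*Z)) by (apply Rmult_le_compat_l; lra).
assert (W2 : xi * ((il+xi)*Y) <= (il+xi) * (k*Z)).
{ replace (xi * ((il+xi)*Y)) with ((il+xi)*(xi*Y)) by ring. apply Rmult_le_compat_l; lra. }
assert (W3 : xi * K <= xi * (k*Z)) by (apply Rmult_le_compat_l; lra).
assert (N : (lam-1)^2/8 + xi*xi + xi*k + (il+xi)*k <= k*(1+2*k)).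
{ unfold k. nra. }
assert (N2 : ((lam-1)^2/8 + xi*xi + xi*k + (il+xi)*k) * Z <= k*(1+2*k) * Z)
  by (apply Rmult_le_compat_r; lra).
assert (G2 : k * G > k * (Z + 2*k*Z)) by (apply Rmult_lt_compat_l; lra).
nra.
Qed.

Lemma xsec (g : R -> pt) a b t : (forall s, a < s < b -> ccomp g AX s = s) -> a < t < b ->
  Derive_n (ccomp g AX) 2 t = 0.
Proof.
intros Hx Ht.
assert (He : 0 < Rmin (t - a) (b - t)) by (apply Rmin_glb_lt; lra).
assert (Loc : forall P : R -> Prop, (forall s, a < s < b -> P s) -> locally t P).
{ intros P HP. exists (mkposreal _ He). intros s Hs0. change (Rabs (s - t) < Rmin (t - a) (b - t)) in Hs0.
  apply HP. pose proof (Rmin_l (t-a) (b-t)); pose proof (Rmin_r (t-a) (b-t));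
    unfold Rabs in Hs0; destruct Rcase_abs in Hs0; lra. }
apply is_derive_unique.
apply is_derive_ext_loc with (fun _ => 1).
{ apply Loc. intros s Hs. symmetry. apply is_derive_unique.
  apply is_derive_ext_loc with (fun r => r).
  - assert (He2 : 0 < Rmin (s - a) (b - s)) by (apply Rmin_glb_lt; lra).
    exists (mkposreal _ He2). intros r Hr. change (Rabs (r - s) < Rmin (s - a) (b - s)) in Hr.
    symmetry. apply Hx. pose proof (Rmin_l (s-a) (b-s)); pose proof (Rmin_r (s-a) (b-s));
    unfold Rabs in Hr; destruct Rcase_abs in Hr; lra.
  - apply (is_derive_id (K:=R_AbsRing)). }
exact (is_derive_const (K:=R_AbsRing) (V:=R_NormedModule) 1 t).
Qed.

Lemma gb (h : pt -> R) p (be : ax) : Rabs (partial be h p) <= grad_norm h p.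
Proof.
unfold grad_norm. rewrite <- sqrt_Rsqr_abs. apply sqrt_le_1_alt. unfold Rsqr.
destruct be; nra.
Qed.

Lemma lam_bounds : 1.6 < lam < 1.65 /\ 0 < / lam < 0.63.
Proof.
assert (H5 := sqrt_sqrt 5 ltac:(lra)). assert (H0 := sqrt_pos 5).
assert (1.6 < lam < 1.65) by (unfold lam; nra).
split; [assumption|]. split. apply Rinv_0_lt_compat; lra.
assert (/lam * lam = 1) by (field; lra).
assert (0 < /lam) by (apply Rinv_0_lt_compat; lra). nra.
Qed.

Lemma quad (G : pt -> pt) (g : R -> pt) (t M C : R) (al : ax) :
  (forall (al be : ax) (p : pt), grad_norm (partial be (gcomp G al)) p < M) ->
  0 < M -> speed g t < C ->
  Rabs (Hs (gcomp G al) g t AX * Derive (ccomp g AX) t + Hs (gcomp G al) g t AY * Derive (ccomp g AY) t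
        + Hs (gcomp G al) g t AZ * Derive (ccomp g AZ) t) < 3 * M * C ^ 2.
Proof.
intros HM HM0 Hsp.
assert (B : forall d b, Rabs (partial d (partial b (gcomp G al)) (g t)) <= M).
{ intros d b. left. eapply Rle_lt_trans; [apply gb| apply HM]. }
unfold Hs.
eapply Rle_lt_trans; [apply qb; apply B|].
set (d1 := Derive (ccomp g AX) t) in *. set (d2 := Derive (ccomp g AY) t) in *.
set (d3 := Derive (ccomp g AZ) t) in *.
assert (E : speed g t * speed g t = d1^2 + d2^2 + d3^2).
{ unfold speed. apply sqrt_sqrt. nra. }
assert (0 <= speed g t) by apply sqrt_pos.
assert (d1^2 + d2^2 + d3^2 < C^2) by nra.
nra.
Qed.

Theorem lemma2p6 (M C : R) (HM : 0 < M) (HC : 1 < C) :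
  exists xi0 : R, 0 < xi0 < lam - 1 /\
  forall xi : R, 0 < xi < xi0 ->
  forall G : pt -> pt,
    C2_diffeo G ->
    (forall (al be : ax) (p : pt), grad_norm (partial be (gcomp G al)) p < M) ->
    C1_close xi G ->
  forall (g : R -> pt) (a b : R),
    a < b ->
    C2_curve_on a b g ->
    (forall t, a < t < b -> speed g t < C) ->
    (forall t, a < t < b -> ccomp g AX t = t) ->
    (forall t, a < t < b ->
       (lam - xi - 1) / 4 * Rabs (Derive_n (ccomp g AZ) 2 t) > 3 * M * C ^ 2) ->
    (forall t, a < t < b ->
       (lam - xi - 1) / 4 * Rabs (Derive_n (ccomp g AZ) 2 t)
       > xi * Rabs (Derive_n (ccomp g AY) 2 t)) ->
  forall t, a < t < b ->
    Rabs (Derive_n (fun s => gcomp G AZ (g s)) 2 t)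
      > Rabs (Derive_n (ccomp g AZ) 2 t)
        + (lam - xi - 1) / 2 * Rabs (Derive_n (ccomp g AZ) 2 t) /\
    (lam - xi - 1) / 4 * Rabs (Derive_n (fun s => gcomp G AZ (g s)) 2 t)
      > xi * Rabs (Derive_n (fun s => gcomp G AY (g s)) 2 t)
        + (lam - 1) ^ 2 / 8 * Rabs (Derive_n (ccomp g AZ) 2 t).
Proof.
destruct lam_bounds as [Hl Hil].
exists (1/100). split; [lra|].
intros xi Hxi G [HGm _] HMb Hclose g a b hab Hg Hsp Hx H3 H4 t Ht.
rewrite (D2 (gcomp G AZ) g a b t (HGm AZ) Hg Ht).
rewrite (D2 (gcomp G AY) g a b t (HGm AY) Hg Ht).
rewrite (xsec g a b t Hx Ht).
pose proof (quad G g t M C AZ HMb HM (Hsp t Ht)) as Qz.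
pose proof (quad G g t M C AY HMb HM (Hsp t Ht)) as Qy.
destruct (Hclose (g t)) as [_ Hp].
pose proof (Hp AZ AY) as Pa. pose proof (Hp AZ AZ) as Pb.
pose proof (Hp AY AY) as Pc. pose proof (Hp AY AZ) as Pe.
simpl in Pa, Pb, Pc, Pe. rewrite Rminus_0_r in Pa, Pe.
specialize (H3 t Ht). specialize (H4 t Ht).
match goal with |- context [Rabs (?X)] => idtac end.
set (sy := Derive_n (ccomp g AY) 2 t) in *.
set (sz := Derive_n (ccomp g AZ) 2 t) in *.
set (QZ := Hs (gcomp G AZ) g t AX * Derive (ccomp g AX) t + Hs (gcomp G AZ) g t AY * Derive (ccomp g AY) t
        + Hs (gcomp G AZ) g t AZ * Derive (ccomp g AZ) t) in *.
set (QY := Hs (gcomp G AY) g t AX * Derive (ccomp g AX) t + Hs (gcomp G AY) g t AY * Derive (ccomp g AY) t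
        + Hs (gcomp G AY) g t AZ * Derive (ccomp g AZ) t) in *.
match goal with |- Rabs ?A > _ /\ _ * Rabs ?A > _ * Rabs ?B + _ =>
  replace A with (QZ + partial AY (gcomp G AZ) (g t) * sy + partial AZ (gcomp G AZ) (g t) * sz)
    by (unfold QZ; ring);
  replace B with (QY + partial AY (gcomp G AY) (g t) * sy + partial AZ (gcomp G AY) (g t) * sz)
    by (unfold QY; ring) end.
apply (arith lam (/lam) xi (3*M*C^2)); try assumption; lra.
Qed.
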